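(* Let $P=(T;U,V)$ be a 3M-DAP with $r_v := s_u u - (t-2)s_t - (v-2)s_v > 0$ and such that $b^* := 2s_v/r_v$ is an integer. Then $f(P) = x_u/u$, and there exists an optimal feasible solution in which every entry of $V$ is strictly greater than $x_u/u$.
   Context: A three-matrix division and assignment problem (3M-DAP) $P=(T;U,V)$ is specified by integers $t,u,v$ (numbers of columns), integers $s_t, s_u, s_v$ (numbers of rows) and rationals $x_t, x_u, x_v$ (required row sums), subject to: $t \ge 2$, $u \ge 2$, $v \ge 1$; if $v = 1$ then $v s_v \le (t-2)s_t$; $s_t > 0$, $s_u > 0$, $s_v \ge 0$; $s_u u + s_v v = s_t t$; $s_u x_u + s_v x_v = s_t x_t$; and $x_u/u < x_v/v$. A feasible solution assigns real values to the entries of an $s_t\times t$ matrix $T$, an $s_u \times u$ matrix $U$ and an $s_v \times v$ matrix $V$ so that every row of $T$, $U$, $V$ sums to $x_t$, $x_u$, $x_v$ respectively, and the multiset of entries of $T$ equals the multiset union of the entries of $U$ and $V$. $f(P)$ is the maximum, over feasible solutions, of the smallest entry of $T$; a feasible solution attaining it is optimal. *)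

(* Defs.v *)
From HB Require Import structures.
From mathcomp Require Import all_boot all_order all_algebra.
From mathcomp Require Import reals.
Set Implicit Arguments. Unset Strict Implicit. Unset Printing Implicit Defensive.
Import Order.TTheory GRing.Theory Num.Theory.
Local Open Scope ring_scope.

Record dap := DAP {
  dt : nat; du : nat; dv : nat;        (* numbers of columns t, u, v *)
  st : nat; su : nat; sv : nat;        (* numbers of rows s_t, s_u, s_v *)
  xt : rat; xu : rat; xv : rat         (* required row sums *)
}.

Definition valid_dap (P : dap) : Prop :=
  [/\ (2 <= dt P)%N, (2 <= du P)%N, (1 <= dv P)%N &
      (dv P = 1%N -> (dv P * sv P <= (dt P - 2) * st P)%N)] /\
  [/\ (0 < st P)%N, (0 < su P)%N,
      (su P * du P + sv P * dv P = st P * dt P)%N,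
      (su P)%:R * xu P + (sv P)%:R * xv P = (st P)%:R * xt P
    & xu P / (du P)%:R < xv P / (dv P)%:R].

Definition entries (R : Type) m n (A : 'M[R]_(m, n)) : seq R :=
  [seq A i j | i <- enum 'I_m, j <- enum 'I_n].

Definition min_entry (R : realDomainType) m n (A : 'M[R]_(m, n)) : R :=
  \big[Num.min/head 0 (entries A)]_(x <- entries A) x.

Definition feasible (R : realType) (P : dap)
  (T : 'M[R]_(st P, dt P)) (U : 'M[R]_(su P, du P)) (V : 'M[R]_(sv P, dv P)) : Prop :=
  [/\ forall i, \sum_j T i j = ratr (xt P),
      forall i, \sum_j U i j = ratr (xu P),
      forall i, \sum_j V i j = ratr (xv P)
    & perm_eq (entries T) (entries U ++ entries V)].

Definition is_fP (R : realType) (P : dap) (c : R) : Prop :=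
  (exists T U V, @feasible R P T U V /\ min_entry T = c) /\
  (forall T U V, @feasible R P T U V -> min_entry T <= c).

Definition r_v (P : dap) : int :=
  (su P * du P)%:Z - ((dt P)%:Z - 2) * (st P)%:Z - ((dv P)%:Z - 2) * (sv P)%:Z.

(* Main.v *)
Require Import Defs.
From HB Require Import structures.
From mathcomp Require Import all_boot all_order all_algebra.
From mathcomp Require Import reals.
From mathcomp Require Import zify ring lra.
Import Order.TTheory GRing.Theory Num.Theory.
Local Open Scope ring_scope.

Definition ent_pairs m n : seq ('I_m * 'I_n) := [seq (i, j) | i <- enum 'I_m, j <- enum 'I_n].

Lemma entriesE (R : Type) m n (A : 'M[R]_(m,n)) :
  entries A = map (fun p => A p.1 p.2) (ent_pairs m n).
Proof. by rewrite /entries /ent_pairs map_allpairs. Qed.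

Lemma ent_pairs_uniq m n : uniq (ent_pairs m n).
Proof.
apply: allpairs_uniq; rewrite ?enum_uniq //.
by move=> [? ?] [? ?] _ _ /= [-> ->].
Qed.

Lemma mem_ent_pairs m n p : p \in ent_pairs m n.
Proof. by case: p => i j; apply/allpairsP; exists (i,j); rewrite !mem_enum. Qed.

Lemma bigmin_le (R : realDomainType) (s : seq R) idx x :
  x \in s -> \big[Num.min/idx]_(y <- s) y <= x.
Proof.
elim: s => // y s IH; rewrite inE big_cons ge_min => /orP [/eqP->|/IH->];
  by rewrite ?lexx ?orbT.
Qed.

Lemma bigmin_ge (R : realDomainType) (s : seq R) idx c :
  c <= idx -> all (fun y => c <= y) s -> c <= \big[Num.min/idx]_(y <- s) y.
Proof.
move=> h; elim: s => [|y s IH] /=; rewrite ?big_nil ?big_cons // => /andP[hy hs].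
by rewrite le_min hy IH.
Qed.

Lemma fP_upper (R : realType) P T U V : valid_dap P -> @feasible R P T U V ->
  min_entry T <= ratr (xu P) / (du P)%:R.
Proof.
case=> [[ht hu hv hv1] [hst hsu _ _ _]] [_ hU _ hperm].
pose i0 : 'I_(su P) := Ordinal hsu.
have hu0 : (0 < du P)%N by apply: leq_trans hu.
have du0 : (0 : R) < (du P)%:R by rewrite ltr0n.
have [j hj] : exists j, U i0 j <= ratr (xu P) / (du P)%:R.
  case: (boolP [exists j, U i0 j <= ratr (xu P) / (du P)%:R]) => [/existsP // | /existsPn hn].
  exfalso.
  have : \sum_(j < du P) (ratr (xu P) / (du P)%:R) < \sum_(j < du P) U i0 j.
    apply: ltr_sum; first by apply/hasP; exists (Ordinal hu0); rewrite ?mem_index_enum.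
    by move=> k _; rewrite ltNge hn.
  by rewrite hU sumr_const card_ord -[X in X < _]mulr_natr divfK ?ltxx // gt_eqF.
apply: le_trans hj; apply: bigmin_le.
rewrite (perm_mem hperm) mem_cat entriesE; apply/orP; left.
by apply/mapP; exists (i0, j) => //; apply: mem_ent_pairs.
Qed.

Definition oval (vlen : nat -> nat -> nat) (o : option (nat * nat)) : nat :=
  if o is Some p then vlen p.1 p.2 else 0%N.

Lemma framework (R : realType) (P : dap) (N b : nat)
  (gn : nat -> nat -> nat * nat) (hn : nat -> nat -> option (nat * nat))
  (vlen : nat -> nat -> nat) :
  valid_dap P -> (0 < N)%N -> (b * st P = N * sv P)%N ->
  (forall j r, (j < sv P)%N -> (r < dv P)%N ->
     [/\ ((gn j r).1 < st P)%N, ((gn j r).2 < dt P)%N & hn (gn j r).1 (gn j r).2 = Some (j, r)]) ->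
  (forall i c j r, (i < st P)%N -> (c < dt P)%N -> hn i c = Some (j, r) ->
     [/\ (j < sv P)%N, (r < dv P)%N & gn j r = (i, c)]) ->
  (forall j r, (j < sv P)%N -> (r < dv P)%N -> (0 < vlen j r)%N) ->
  (forall j, (j < sv P)%N -> (\sum_(r < dv P) vlen j r)%N = N) ->
  (forall i, (i < st P)%N -> (\sum_(c < dt P) oval vlen (hn i c))%N = b) ->
  exists (T : 'M[R]_(st P, dt P)) (U : 'M[R]_(su P, du P)) (V : 'M[R]_(sv P, dv P)),
    [/\ feasible T U V, min_entry T = ratr (xu P) / (du P)%:R
      & forall i j, ratr (xu P) / (du P)%:R < V i j].
Proof.
move=> hP hN hbN hA hB hC hD hE.
have hP' := hP.
case: hP' => [[ht hu hv hv1] [hst hsu hcnt hsum hlt]].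
have [a ha] : {a : R | a = ratr (xu P) / (du P)%:R} by eexists.
rewrite -ha.
have [del hdel] : {del : R | del = ratr (xv P) - (dv P)%:R * a} by eexists.
have [ka hka] : {ka : R | ka = del / N%:R} by eexists.
have du0 : (0:R) < (du P)%:R by rewrite ltr0n; apply: leq_trans hu.
have dv0 : (0:R) < (dv P)%:R by rewrite ltr0n.
have st0 : (0:R) < (st P)%:R by rewrite ltr0n.
have N0 : (0:R) < N%:R by rewrite ltr0n.
have hxu : ratr (xu P) = (du P)%:R * a by rewrite ha mulrC divfK // gt_eqF.
have del0 : 0 < del.
  rewrite hdel subr_gt0 mulrC -ltr_pdivlMr // ha.
  by move: hlt; rewrite -(ltr_rat R) !fmorph_div !rmorph_nat.
have ka0 : 0 < ka by rewrite hka divr_gt0.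
pose T : 'M[R]_(st P, dt P) := \matrix_(i, c) (a + ka * (oval vlen (hn i c))%:R).
pose U : 'M[R]_(su P, du P) := const_mx a.
pose V : 'M[R]_(sv P, dv P) := \matrix_(j, r) (a + ka * (vlen j r)%:R).
have feas : feasible T U V.
  split.
  - move=> i; rewrite (eq_bigr (fun c : 'I_(dt P) => a + ka * (oval vlen (hn i c))%:R));
      last by move=> c _; rewrite mxE.
    rewrite big_split /= -mulr_sumr -natr_sum hE // sumr_const card_ord -[a *+ _]mulr_natr.
    have hsumR : (su P)%:R * ratr (xu P) + (sv P)%:R * ratr (xv P) = (st P)%:R * ratr (xt P) :> R.
      by have := congr1 (@ratr R) hsum; rewrite !rmorphD !rmorphM /= !rmorph_nat.
    have hcntR : (su P)%:R * (du P)%:R + (sv P)%:R * (dv P)%:R = (st P)%:R * (dt P)%:R :> R.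
      by rewrite -!natrM -natrD hcnt.
    have hbNR : b%:R * (st P)%:R = N%:R * (sv P)%:R :> R by rewrite -!natrM hbN.
    apply: (@mulfI _ (st P)%:R); first by rewrite gt_eqF.
    have -> : (st P)%:R * (a * (dt P)%:R + ka * b%:R) =
              (st P)%:R * (dt P)%:R * a + ka * (b%:R * (st P)%:R) by ring.
    rewrite hbNR.
    have -> : ka * (N%:R * (sv P)%:R) = del * (sv P)%:R.
      by rewrite hka; field; rewrite gt_eqF.
    rewrite -hsumR hxu -hcntR hdel; ring.
  - move=> i; rewrite (eq_bigr (fun _ => a)); last by move=> c _; rewrite mxE.
    by rewrite sumr_const card_ord -mulr_natr mulrC hxu.
  - move=> j; rewrite (eq_bigr (fun r : 'I_(dv P) => a + ka * (vlen j r)%:R));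
      last by move=> c _; rewrite mxE.
    rewrite big_split /= -mulr_sumr -natr_sum hD // sumr_const card_ord -[a *+ _]mulr_natr.
    rewrite hka divfK ?gt_eqF // hdel; ring.
  - pose i0 : 'I_(st P) := Ordinal hst.
    have ht0 : (0 < dt P)%N by apply: leq_trans ht.
    pose c0 : 'I_(dt P) := Ordinal ht0.
    pose G (p : 'I_(sv P) * 'I_(dv P)) : 'I_(st P) * 'I_(dt P) :=
      (insubd i0 (gn p.1 p.2).1, insubd c0 (gn p.1 p.2).2).
    have hG : forall p, hn (G p).1 (G p).2 = Some (val p.1, val p.2).
      move=> [j r] /=; have [h1 h2 h3] := hA j r (ltn_ord j) (ltn_ord r).
      by rewrite !val_insubd h1 h2.
    have Ginj : injective G.
      move=> p q hpq; have := hG p; rewrite hpq hG => -[e1 e2].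
      by case: p q e1 e2 {hpq} => [j r] [j' r'] /= /val_inj -> /val_inj ->.
    pose S := fun x : 'I_(st P) * 'I_(dt P) => hn x.1 x.2 != None.
    pose E := ent_pairs (st P) (dt P).
    have hperm1 : perm_eq [seq x <- E | S x] (map G (ent_pairs (sv P) (dv P))).
      apply: uniq_perm; first by rewrite filter_uniq // ent_pairs_uniq.
        by rewrite map_inj_uniq // ent_pairs_uniq.
      move=> x; rewrite mem_filter mem_ent_pairs andbT.
      apply/idP/mapP.
      - rewrite /S; case E0: (hn x.1 x.2) => [[j r]|] // _.
        have [hj hr hg] := hB _ _ _ _ (ltn_ord x.1) (ltn_ord x.2) E0.
        exists (Ordinal hj, Ordinal hr); first exact: mem_ent_pairs.
        case: x E0 hg => [i c] /= E0 hg; rewrite /G /= hg /=.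
        by congr pair; apply: val_inj; rewrite val_insubd ltn_ord.
      - by move=> [p _ ->]; rewrite /S hG.
    have hsizeS : size [seq x <- E | S x] = (sv P * dv P)%N.
      by rewrite (perm_size hperm1) size_map /ent_pairs size_allpairs !size_enum_ord.
    have hsizeC : size [seq x <- E | predC S x] = (su P * du P)%N.
      have := count_predC S E.
      rewrite -!size_filter hsizeS /E /ent_pairs size_allpairs !size_enum_ord -hcnt.
      by move/eqP; rewrite [X in _ == X]addnC eqn_add2l => /eqP.
    rewrite entriesE.
    apply: (@perm_trans _ (map (fun p => T p.1 p.2) ([seq x <- E | S x] ++ [seq x <- E | predC S x]))).
      by rewrite perm_sym; apply: perm_map; apply/permPl; apply: perm_filterC.
    rewrite map_cat perm_catC; apply: perm_cat.
    + have -> : entries U = nseq (su P * du P) a.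
        rewrite entriesE; set s := map _ _.
        have -> : (su P * du P)%N = size s by rewrite size_map size_allpairs !size_enum_ord.
        by apply/all_pred1P; rewrite all_map; apply/allP => x _ /=; rewrite mxE.
      have -> : map (fun p => T p.1 p.2) [seq x <- E | predC S x] = nseq (su P * du P) a.
        rewrite -hsizeC -(size_map (fun p => T p.1 p.2)); apply/all_pred1P; rewrite all_map.
        apply/allP => x; rewrite mem_filter /= /S negbK => /andP [/eqP hx _].
        by rewrite mxE hx /= mulr0 addr0.
      exact: perm_refl.
    + apply: (perm_trans (perm_map _ hperm1)); rewrite -map_comp entriesE.
      have -> : map ((fun p => T p.1 p.2) \o G) (ent_pairs (sv P) (dv P)) =
                map (fun p => V p.1 p.2) (ent_pairs (sv P) (dv P)).
        by apply: eq_map => p /=; rewrite !mxE hG.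
      exact: perm_refl.
have aleT : forall i c, a <= T i c.
  by move=> i c; rewrite mxE lerDl mulr_ge0 // ltW.
exists T, U, V; split => //.
- apply/le_anti; have := @fP_upper R P T U V hP feas; rewrite -ha => -> /=.
  pose i0 : 'I_(st P) := Ordinal hst.
  have ht0 : (0 < dt P)%N by apply: leq_trans ht.
  pose c0 : 'I_(dt P) := Ordinal ht0.
  have hall : all (fun y => a <= y) (entries T).
    by rewrite entriesE all_map; apply/allP => p _ /=.
  apply: bigmin_ge => //.
  have : T i0 c0 \in entries T.
    by rewrite entriesE; apply/mapP; exists (i0, c0) => //; apply: mem_ent_pairs.
  by case: (entries T) hall => // x s /= /andP[].
- by move=> j r; rewrite mxE ltrDl mulr_gt0 // ltr0n hC.
Qed.

Lemma dm d k x : (x < d)%N -> ((k*d + x) %/ d = k)%N /\ ((k*d + x) %% d = x)%N.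
Proof.
move=> h; have d0 : (0 < d)%N by apply: leq_ltn_trans h.
by rewrite divnMDl // divn_small // addn0 modnMDl modn_small.
Qed.

Lemma decomp d m j : (j < m * d)%N -> exists k x, [/\ j = (k*d + x)%N, (x < d)%N & (k < m)%N].
Proof.
move=> h; have d0 : (0 < d)%N by case: d h => //; rewrite muln0.
exists (j %/ d)%N, (j %% d)%N; split; [exact: divn_eq | exact: ltn_pmod | by rewrite ltn_divLR].
Qed.

Lemma sum_ltb n b : (\sum_(c < n) ((c < b)%N : nat))%N = minn n b.
Proof.
elim: n => [|n IH]; first by rewrite big_ord0 min0n.
rewrite big_ord_recr /= IH; case: (ltnP n b) => h /=; lia.
Qed.

Lemma inst1 (R : realType) (P : dap) (b : nat) :
  valid_dap P -> sv P = (b * st P)%N -> (b <= dt P)%N -> (dv P = 1%N \/ sv P = 0%N) ->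
  exists (T : 'M[R]_(st P, dt P)) (U : 'M[R]_(su P, du P)) (V : 'M[R]_(sv P, dv P)),
    [/\ feasible T U V, min_entry T = ratr (xu P) / (du P)%:R
      & forall i j, ratr (xu P) / (du P)%:R < V i j].
Proof.
move=> hP hsv hbt hor.
have hP' := hP; case: hP' => [[ht hu hv hv1] [hst hsu hcnt hsum hlt]].
apply: (@framework R P (dv P) b (fun j r => (j %/ b, j %% b)%N)
   (fun i c => if (c < b)%N then Some ((i * b + c)%N, 0%N) else None) (fun _ _ => 1%N)) => //.
- by case: hor => e; rewrite e in hsv *; lia.
- move=> j r hj hr /=.
  have b0 : (0 < b)%N by case: b hsv hj {hbt} => // ->.
  split; first by rewrite ltn_divLR // mulnC -hsv.
    by apply: leq_trans hbt; rewrite ltn_pmod.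
  rewrite ltn_pmod // -divn_eq; congr (Some (_, _)).
  case: hor => e; first by move: hr; rewrite e; case: r.
  by move: hj; rewrite e.
- move=> i c j r hi hc /=; case: ifP => // hcb [<- <-].
  split => //; first by rewrite hsv; nia.
  by have [-> ->] := dm _ i _ hcb.
- move=> j _; rewrite sum_nat_const card_ord muln1 //.
- move=> i _; rewrite (eq_bigr (fun c : 'I_(dt P) => ((c < b)%N : nat))).
    by rewrite sum_ltb; apply/minn_idPr.
  by move=> c _; case: ifP.
Qed.

Definition gn2 (b w j r : nat) : nat * nat :=
  let k := (j %/ b)%N in let j' := (j %% b)%N in
  if r == 0%N then (if j' == 0%N then ((k * (w*b+1) + 0)%N, 0%N) else ((k * (w*b+1) + j' * w)%N, 1%N))
  else ((k * (w*b+1) + (j' * w + r))%N, 0%N).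

Definition hn2 (b w i c : nat) : option (nat * nat) :=
  let k := (i %/ (w*b+1))%N in let i' := (i %% (w*b+1))%N in
  if c == 0%N then
    (if i' == 0%N then Some ((k * b + 0)%N, 0%N)
     else Some ((k * b + (i'.-1) %/ w)%N, ((i'.-1) %% w).+1))
  else if c == 1%N then
    (if [&& i' != 0%N, (i' %% w == 0)%N & (i' %/ w < b)%N] then Some ((k * b + i' %/ w)%N, 0%N) else None)
  else None.

Definition vlen2 (b w j r : nat) : nat :=
  let j' := (j %% b)%N in
  if r == 0%N then (b - j')%N else if r == w then j'.+1 else b.


Lemma vlen2_sum b w j : (0 < b)%N -> (0 < w)%N ->
  (\sum_(r < w.+1) vlen2 b w j r)%N = (w * b + 1)%N.
Proof.
move=> b0; case: w => // w' _.
have hj := ltn_pmod j b0.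
rewrite big_ord_recl big_ord_recr /=.
rewrite (eq_bigr (fun _ => b)); last first.
  move=> i _; rewrite /vlen2 /=.
  by rewrite /bump /= add1n eqSS ltn_eqF.
rewrite sum_nat_const card_ord /vlen2 /= eqxx.
lia.
Qed.

Lemma hn2_rowsum b w t i : (0 < b)%N -> (0 < w)%N -> (2 <= t)%N ->
  (\sum_(c < t) oval (vlen2 b w) (hn2 b w i c))%N = b.
Proof.
move=> b0 w0; case: t => [|[|t]] // _.
rewrite !big_ord_recl big1 ?addn0; last by move=> c _.
rewrite /hn2 /=.
set N := (w * b + 1)%N.
have N0 : (0 < N)%N by rewrite /N addn1.
set k := (i %/ N)%N; set i' := (i %% N)%N.
have hi' : (i' < N)%N by rewrite /i' ltn_pmod.
case: eqP => [e|ne] /=.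
  by rewrite /vlen2 /= modnMDl modn_small // subn0 addn0.
set q := (i'.-1 %/ w)%N; set rho := (i'.-1 %% w)%N.
have ei' : i' = (q * w + rho).+1.
  by rewrite /q /rho -divn_eq; case: (i') ne.
have hrho : (rho < w)%N by rewrite /rho ltn_pmod.
have hq : (q < b)%N.
  have : (q * w < b * w)%N by move: hi'; rewrite ei' /N; nia.
  by rewrite ltn_pmul2r.
rewrite /vlen2 /= modnMDl modn_small //.
case: eqP => [erho|nrho].
- have ei2 : i' = (q.+1 * w)%N by rewrite ei' -erho; lia.
  rewrite ei2 modnMl mulnK // eqxx /=.
  case: ifP => hqb /=.
    by rewrite modnMDl modn_small //; lia.
  lia.
- have hm : (i' %% w = rho.+1)%N.
    rewrite ei' -addnS modnMDl modn_small //.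
    by rewrite ltn_neqAle hrho andbT; apply/eqP.
  by rewrite hm /= addn0.
Qed.

Lemma inst2 (R : realType) (P : dap) (m b : nat) :
  valid_dap P -> (2 <= dv P)%N -> (0 < b)%N ->
  sv P = (m * b)%N -> st P = (m * ((dv P).-1 * b + 1))%N ->
  exists (T : 'M[R]_(st P, dt P)) (U : 'M[R]_(su P, du P)) (V : 'M[R]_(sv P, dv P)),
    [/\ feasible T U V, min_entry T = ratr (xu P) / (du P)%:R
      & forall i j, ratr (xu P) / (du P)%:R < V i j].
Proof.
move=> hP hv2 b0 hsv hst.
have hP' := hP; case: hP' => [[ht hu hv hv1] [hst0 hsu hcnt hsum hlt]].
set w := (dv P).-1 in hst.
have hdv : dv P = w.+1 by rewrite /w; case: (dv P) hv2.
have w0 : (0 < w)%N by rewrite /w; case: (dv P) hv2 => // [[]].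
set N := (w * b + 1)%N in hst.
apply: (@framework R P N b (gn2 b w) (hn2 b w) (vlen2 b w)) => //.
- by rewrite /N addn1.
- by rewrite hsv hst; nia.
- move=> j r hj hr.
  move: (hj); rewrite hsv => /decomp [k [j' [ej hj' hk]]].
  subst j.
  have N0 : (0 < N)%N by rewrite /N addn1.
  have hkN : forall x, (x < N)%N -> (k * N + x < st P)%N.
    by move=> x hx; rewrite hst; nia.
  rewrite /gn2 /=; have [-> ->] := dm _ k _ hj'.
  rewrite -/N.
  case: r hr => [|r] hr /=.
  + case: eqP => [e|ne] /=.
    * split; [exact: hkN | by apply: leq_trans ht |].
      by rewrite /hn2 -/N; have [-> ->] := dm _ k _ N0; rewrite e.
    * have hjw : (j' * w < N)%N by rewrite /N; nia.
      split; [exact: hkN | by [] |].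
      rewrite /hn2 -/N; have [-> ->] := dm _ k _ hjw => /=.
      by rewrite muln_eq0 (negbTE (introN eqP ne)) /= gtn_eqF // modnMl mulnK // hj'.
  + have hrw : (r < w)%N by rewrite hdv in hr.
    have hjw : (j' * w + r.+1 < N)%N by rewrite /N; nia.
    split; [exact: hkN | by apply: leq_trans ht |].
    rewrite /hn2 -/N; have [-> ->] := dm _ k _ hjw => /=.
    rewrite addnS /=.
    by have [-> ->] := dm _ j' _ hrw.
- move=> i c j r hi hc.
  have N0 : (0 < N)%N by rewrite /N addn1.
  move: (hi); rewrite hst => /decomp [k [i' [ei hi' hk]]]; subst i.
  rewrite /hn2 -/N; have [-> ->] := dm _ k _ hi'.
  have hkb : forall x, (x < b)%N -> (k * b + x < sv P)%N by move=> x hx; rewrite hsv; nia.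
  case: c hc => [|[|c]] hc /=.
  + case: eqP => [e|ne] [<- <-].
    * subst i'; split; [exact: hkb | by [] |].
      by rewrite /gn2 /=; have [-> ->] := dm _ k _ b0.
    * set q := (i'.-1 %/ w)%N; set rho := (i'.-1 %% w)%N.
      have ei' : i' = (q * w + rho).+1.
        by rewrite /q /rho -divn_eq; case: (i') ne.
      have hrho : (rho < w)%N by rewrite /rho ltn_pmod.
      have hq : (q < b)%N.
        have : (q * w < b * w)%N by move: hi'; rewrite ei' /N; nia.
        by rewrite ltn_pmul2r.
      split; [exact: hkb | by rewrite hdv ltnS | ].
      rewrite /gn2 /=; have [-> ->] := dm _ k _ hq => /=.
      by rewrite -/N ei' addnS.
  + case: ifP => // /and3P [h1 h2 h3] [<- <-].
    split; [exact: hkb | by [] |].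
    rewrite /gn2 /=; have [-> ->] := dm _ k _ h3 => /=.
    have ed : (i' %/ w * w = i')%N by rewrite divnK.
    rewrite -/N ed ifF //; apply/eqP => e0; move: h1; rewrite -ed e0.
    by [].
  + by [].
- move=> j r hj _; rewrite /vlen2; have hjb := ltn_pmod j b0.
  case: eqP => _; first by rewrite subn_gt0.
  by case: eqP.
- by move=> j _; rewrite hdv vlen2_sum.
- by move=> i _; rewrite hn2_rowsum.
Qed.

Theorem theorem5 (R : realType) (P : dap) :
  valid_dap P ->
  0 < r_v P ->
  (exists b : int, (2 * (sv P)%:Z)%:~R / (r_v P)%:~R = b%:~R :> rat) ->
  is_fP P (ratr (xu P) / (du P)%:R : R) /\
  exists (T : 'M[R]_(st P, dt P)) (U : 'M[R]_(su P, du P)) (V : 'M[R]_(sv P, dv P)),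
    [/\ feasible T U V, min_entry T = ratr (xu P) / (du P)%:R
      & forall i j, ratr (xu P) / (du P)%:R < V i j].
Proof.
move=> hP hr [B hB].
have hP' := hP; case: hP' => [[ht hu hv hv1] [hst hsu hcnt hsum hlt]].
have hex : exists (T : 'M[R]_(st P, dt P)) (U : 'M[R]_(su P, du P)) (V : 'M[R]_(sv P, dv P)),
    [/\ feasible T U V, min_entry T = ratr (xu P) / (du P)%:R
      & forall i j, ratr (xu P) / (du P)%:R < V i j].
  have rv0 : (r_v P)%:~R != 0 :> rat by rewrite intr_eq0 gt_eqF.
  have e1 : (2 * (sv P)%:Z = B * r_v P)%R.
    by apply: (@intr_inj rat); rewrite [RHS]intrM -hB divfK.
  have [mz hmz] : {mz : int | mz = (st P)%:Z - ((dv P)%:Z - 1) * (sv P)%:Z} by eexists.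
  have erv : r_v P = 2 * mz by rewrite hmz /r_v; lia.
  have hsvB : (sv P)%:Z = B * mz by lia.
  have mz0 : 0 < mz by lia.
  case: mz hmz erv hsvB mz0 => [mn|n] hmz erv hsvB mz0; last by [].
  case: B hB e1 hsvB => [b|n] hB e1 hsvB; last by nia.
  have hsvn : sv P = (b * mn)%N by lia.
  have mn0 : (0 < mn)%N by lia.
  have [dv1|dv2] := leqP (dv P) 1.
  - have e : dv P = 1%N by lia.
    have hmn : mn = st P by move: hmz; rewrite e; lia.
    apply: (@inst1 R P b) => //; [by rewrite hsvn hmn | | by left].
    have := hv1 e; rewrite e mul1n hsvn hmn leq_pmul2r // => h.
    by apply: leq_trans h (leq_subr _ _).
  - have [sv0|svp] := posnP (sv P).
      by apply: (@inst1 R P 0) => //; right.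
    have b0 : (0 < b)%N by move: svp; rewrite hsvn; case: (b).
    apply: (@inst2 R P mn b) => //; first by rewrite hsvn mulnC.
    set w := (dv P).-1.
    have hdv : dv P = w.+1 by rewrite /w; case: (dv P) dv2.
    have hst' : st P = (mn + w * sv P)%N by move: hmz; rewrite hdv; lia.
    by rewrite hst' hsvn; lia.
split => //.
split; first by case: hex => T [U [V [hf hm _]]]; exists T, U, V.
by move=> T U V hf; apply: (@fP_upper R P T U V hP hf).
Qed.
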